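(* There is an absolute constant $c>0$ such that the following holds. Let $d\geq 2$ and $n\geq 2$ be integers and let $G$ be an acyclic directed graph on $n$ vertices in which every vertex has outdegree at most $d$, and which contains a directed Hamilton path. Then $G$ contains an induced directed path on at least $c\,\frac{\log n}{\log d}$ vertices.
   Context: A directed path $x_1\to x_2\to\dots\to x_k$ in a directed graph $G$ is induced if the only arcs of $G$ between vertices of $\{x_1,\dots,x_k\}$ (in either direction) are the arcs $x_i\to x_{i+1}$, $1\le i<k$. A directed Hamilton path is a directed path visiting every vertex. Logarithms are natural logarithms. *)

(* Defs.v *)
From mathcomp Require Import all_boot.
From Stdlib Require Import Reals.
Set Implicit Arguments. Unset Strict Implicit. Unset Printing Implicit Defensive.

(* A directed graph on vertex set T is an arc relation e : rel T
   (e x y means there is an arc x -> y). *)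

Definition acyclic (T : finType) (e : rel T) : Prop :=
  forall (x : T) (p : seq T), p != [::] -> path e x p -> last x p != x.

Definition outdeg (T : finType) (e : rel T) (x : T) : nat := #|[set y | e x y]|.

Definition is_dipath (T : finType) (e : rel T) (s : seq T) : Prop :=
  uniq s /\ sorted e s.

Definition has_hamilton_dipath (T : finType) (e : rel T) : Prop :=
  exists s : seq T, is_dipath e s /\ size s = #|T|.

Definition is_induced_dipath (T : finType) (e : rel T) (s : seq T) : Prop :=
  is_dipath e s /\
  forall i j : nat, i < size s -> j < size s ->
    forall x0 : T, e (nth x0 s i) (nth x0 s j) -> j = i.+1.

(* Main.v *)
Require Import Defs.
From mathcomp Require Import all_boot.
From Stdlib Require Import Reals Lia Lra.
From mathcomp Require Import zify.
Set Implicit Arguments. Unset Strict Implicit. Unset Printing Implicit Defensive.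

Lemma subwalk (T : eqType) (e : rel T) (x0 : T) x p i j :
  path e x p -> i <= j -> j <= size p ->
  path e (nth x0 (x::p) i) (take (j - i) (drop i p)) /\
  last (nth x0 (x::p) i) (take (j - i) (drop i p)) = nth x0 (x::p) j.
Proof.
elim: p x i j => [|y p IH] x i j /=.
  move=> _ Hij; rewrite leqn0 => /eqP Hj; subst j.
  by move: Hij; rewrite leqn0 => /eqP ->.
case/andP=> exy pp; case: i => [|i] Hij Hj.
  rewrite subn0 drop0 /=; case: j Hij Hj => [|j] _ Hj //=.
  have [H1 H2] := IH y 0 j pp (leq0n _) Hj.
  by move: H1 H2; rewrite subn0 drop0 /= exy => -> ->.
case: j Hij Hj => [|j] // Hij Hj.
by rewrite subSS /=; apply: IH.
Qed.

Lemma no_loop (T : finType) (e : rel T) x : acyclic e -> ~~ e x x.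
Proof.
move=> ac; apply/negP=> exx; have := ac x [:: x] isT; rewrite /= exx eqxx.
by move/(_ isT).
Qed.

Lemma shortest_induced (T : finType) (e : rel T) r p :
  acyclic e -> path e r p ->
  (forall q, path e r q -> last r q = last r p -> size p <= size q) ->
  is_induced_dipath e (r :: p).
Proof.
move=> ac pp short.
have sub := @subwalk T e r r p.
split; first split.
- apply/negPn/negP=> /(uniqPn r) [i [j [ij js eqij]]].
  have [H1 H2] := sub i j pp (ltnW ij) js.
  have := ac _ _ _ H1; rewrite H2 -eqij eqxx /= => /(_ _)/negP; apply; last by [].
  rewrite -size_eq0 size_take size_drop; apply/eqP.
  have: i < size p by apply: leq_trans ij js.
  move=> Hi; case: ifP => _; apply/eqP; rewrite subn_eq0 -ltnNge //.
- by [].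
move=> i j iS jS x0.
rewrite (set_nth_default r x0 iS) (set_nth_default r x0 jS) => eij.
have ip : i <= size p by []. have jp : j <= size p by [].
case: (ltngtP j i.+1) => // Hj.
-
  rewrite ltnS in Hj.
  case: (ltngtP j i) Hj => // [ji|ji] _.
  + have [H1 H2] := sub j i pp (ltnW ji) ip.
    have := ac (nth r (r :: p) j) (rcons (take (i - j) (drop j p)) (nth r (r :: p) j)).
    rewrite rcons_path H1 H2 eij last_rcons eqxx /= -size_eq0 size_rcons.
    by move=> /(_ isT isT).
  + by subst j; move: eij; rewrite (negbTE (no_loop _ ac)).
- have [H1 H2] := sub 0 i pp (leq0n _) ip.
  have [H3 H4] := sub j (size p) pp jp (leqnn _).
  move: H1 H2; rewrite subn0 drop0 /= => H1 H2.
  set w1 := take i p in H1 H2 *. set w2 := take (size p - j) (drop j p) in H3 H4 *.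
  have := short (w1 ++ nth r (r :: p) j :: w2).
  rewrite cat_path H1 H2 /= eij H3 last_cat H2 /= H4 -last_nth.
  move=> /(_ isT erefl); rewrite size_cat /= !size_take size_drop.
  have : i <= size p by []. move=> _.
  rewrite ltnn; case: ltnP => H0 H; exfalso; move: H; lia.
Qed.
Definition nbr (T : finType) (e : rel T) (A : {set T}) : {set T} :=
  \bigcup_(x in A) [set y | e x y].

Fixpoint ball (T : finType) (e : rel T) (r : T) (k : nat) : {set T} :=
  if k is k'.+1 then r |: nbr e (ball e r k') else [set r].

Lemma r_in_ball (T : finType) (e : rel T) r k : r \in ball e r k.
Proof. by case: k => [|k] /=; rewrite ?set11 ?setU11. Qed.

Lemma nbrS (T : finType) (e : rel T) (A B : {set T}) :
  A \subset B -> nbr e A \subset nbr e B.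
Proof.
move=> /subsetP AB; apply/subsetP => y /bigcupP [x xA yx].
by apply/bigcupP; exists x => //; apply: AB.
Qed.

Lemma ball_mono1 (T : finType) (e : rel T) r k : ball e r k \subset ball e r k.+1.
Proof.
elim: k => [|k IH] /=.
  by rewrite sub1set setU11.
by apply: setUS; apply: nbrS.
Qed.

Lemma ball_mono (T : finType) (e : rel T) r k m :
  k <= m -> ball e r k \subset ball e r m.
Proof.
move=> /subnKC <-; elim: (m - k) => [|n IH]; first by rewrite addn0.
by rewrite addnS; apply: subset_trans IH (ball_mono1 _ _ _).
Qed.

Lemma walk_in_ball (T : finType) (e : rel T) r p :
  path e r p -> last r p \in ball e r (size p).
Proof.
elim/last_ind: p => [|p y IH]; first by rewrite /= set11.
rewrite rcons_path last_rcons size_rcons => /andP [pp ey] /=.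
apply/setU1P; right; apply/bigcupP; exists (last r p); first exact: IH.
by rewrite inE.
Qed.

Lemma ball_walk (T : finType) (e : rel T) r k t :
  t \in ball e r k -> exists p, [/\ path e r p, last r p = t & size p <= k].
Proof.
elim: k t => [|k IH] t /=.
  by rewrite inE => /eqP ->; exists [::].
case/setU1P => [->|/bigcupP [x /IH [p [pp lp sp]]]]; first by exists [::].
rewrite inE => ext; exists (rcons p t).
by rewrite rcons_path last_rcons size_rcons pp lp ext.
Qed.

Lemma card_nbr (T : finType) (e : rel T) d (A : {set T}) :
  (forall x, outdeg e x <= d) -> #|nbr e A| <= #|A| * d.
Proof.
move=> od; rewrite -sum_nat_const /nbr.
apply: (big_ind2 (fun (S : {set T}) n => #|S| <= n)).
- by rewrite cards0.
- move=> S1 n1 S2 n2 h1 h2; apply: leq_trans (leq_card_setU _ _) _.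
  exact: leq_add.
- by move=> x _; apply: od.
Qed.

Lemma card_ball (T : finType) (e : rel T) d r k :
  2 <= d -> (forall x, outdeg e x <= d) -> #|ball e r k| < expn d k.+1.
Proof.
move=> d2 od; elim: k => [|k IH] /=; first by rewrite cards1 expnS expn0 muln1.
rewrite cardsU1.
have := card_nbr (ball e r k) od.
rewrite expnS; move: IH; set a := #|_|; set b := #|_|; set c := expn d _.
move=> h1 h2; have h3 : (r \notin nbr e (ball e r k)) <= 1 by case: (_ \notin _).
nia.
Qed.
Lemma INR_expn d k : INR (expn d k) = (INR d ^ k)%R.
Proof.
elim: k => [|k IH]; first by rewrite expn0.
by rewrite expnS -multE mult_INR IH.
Qed.

Lemma real_part (n d k : nat) : 2 <= d -> 2 <= n -> n < expn d k ->
  (1 * (ln (INR n) / ln (INR d)) <= INR k)%R.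
Proof.
move=> d2 n2 nk.
have Hd : (1 < INR d)%R by apply: (lt_INR 1); apply/ltP.
have Hn : (0 < INR n)%R by apply: (lt_INR 0); apply/ltP; lia.
have ld : (0 < ln (INR d))%R by rewrite -ln_1; apply: ln_increasing; lra.
have : (ln (INR n) < ln (INR (expn d k)))%R.
  by apply: ln_increasing => //; apply: lt_INR; apply/ltP.
rewrite INR_expn ln_pow; last lra.
move=> H; rewrite Rmult_1_l.
apply: (Rmult_le_reg_r (ln (INR d))) => //.
unfold Rdiv; rewrite Rmult_assoc Rinv_l; lra.
Qed.

Lemma comb (T : finType) (e : rel T) d r h :
  acyclic e -> 2 <= d -> (forall x, outdeg e x <= d) ->
  path e r h -> (forall t, t \in r :: h) ->
  exists s, is_induced_dipath e s /\ #|T| < expn d (size s).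
Proof.
move=> ac d2 od ph allin.
have exK : exists k, ball e r k == setT.
  exists (size h); apply/eqP/setP => t; rewrite inE.
  have := allin t; rewrite -index_mem ltnS => ti.
  have [H1 H2] := subwalk r ph (leq0n _) ti.
  move: H1 H2; rewrite subn0 drop0 /= nth_index ?allin // => H1 H2.
  have hk : size (take (index t (r :: h)) h) <= size h.
    by rewrite size_take; case: ltnP => // /ltnW.
  by have := walk_in_ball H1; rewrite H2 => /(subsetP (ball_mono _ _ hk)).
case: (ex_minnP exK) => K /eqP HK Kmin.
have [t tmin] : exists t, forall q, path e r q -> last r q = t -> K <= size q.
  case: K HK Kmin => [|k] HK Kmin; first by exists r.
  case: (pickP (fun t => t \notin ball e r k)) => [t tN | all].
    exists t => q pq lq; rewrite ltnNge; apply/negP => qk.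
    move/negP: tN; apply; rewrite -lq.
    exact: (subsetP (ball_mono _ _ qk)) _ (walk_in_ball pq).
  have : ball e r k == setT.
    by apply/eqP/setP => t; rewrite inE; have := all t => /= /negbFE.
  by move/Kmin; rewrite ltnn.
have := ball_walk (_ : t \in ball e r K).
rewrite HK inE => /(_ isT) [p [pp lp sp]].
have eK : size p = K by apply/eqP; rewrite eqn_leq sp tmin.
exists (r :: p); split.
  apply: shortest_induced => // q pq lq; rewrite eK; apply: tmin => //.
  by rewrite lq.
rewrite -cardsT -HK /= eK; exact: card_ball.
Qed.

Theorem mainTheorem5 :
  exists c : R, (0 < c)%R /\
    forall (n d : nat) (e : rel 'I_n),
      2 <= d -> 2 <= n ->
      acyclic e ->
      (forall x : 'I_n, outdeg e x <= d) ->
      has_hamilton_dipath e ->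
      exists s : seq 'I_n, is_induced_dipath e s /\
        (c * (ln (INR n) / ln (INR d)) <= INR (size s))%R.
Proof.
exists 1%R; split; first lra.
move=> n d e d2 n2 ac od [s [[us ss] sz]].
case: s us ss sz => [|r h] us ss sz.
  by move: sz; rewrite card_ord /= => ?; subst n.
have allin : forall t, t \in r :: h.
  move=> t.
  have H : #|[predC (r :: h)]| = 0.
    have := cardC (mem (r :: h)); rewrite (card_uniqP us) sz.
    by move/eqP; rewrite -[X in _ == X]addn0 eqn_add2l => /eqP.
  by have := card0_eq H t; rewrite !inE => /negbFE.
have [s' [ind lt]] := comb ac d2 od ss allin.
exists s'; split => //.
apply: real_part => //.
by rewrite -{1}(card_ord n).
Qed.
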